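(* Let $\mathcal L$ be a class of modules and let $M$ be a pure-epimorphic image of a strict $\mathcal L$-atomic module belonging to $\mathcal L$. Then the following are equivalent: (i) $M$ is strict $\mathcal L$-atomic; (ii) every single element $m\in M$ is an $\mathcal L$-free realization of some (unary) pp formula.
   Context: $R$ is a ring with $1$; modules are left $R$-modules. pp formulas as usual; a pure epimorphism is a surjective homomorphism such that every tuple of the target satisfying a pp formula has a preimage satisfying the same formula. $(M,\bar m)$ is an $\mathcal L$-free realization of a pp formula $\phi$ if $\bar m\in\phi(M)$ and for every $L\in\mathcal L$ and $\bar c\in\phi(L)$ there is a homomorphism $M\to L$ sending $\bar m$ to $\bar c$; $M$ is strict $\mathcal L$-atomic if every finite tuple of $M$ is an $\mathcal L$-free realization of some pp formula. *)

(* Defs.v *)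
From HB Require Import structures.
From mathcomp Require Import all_boot all_order all_algebra.
Set Implicit Arguments. Unset Strict Implicit. Unset Printing Implicit Defensive.
Import GRing.Theory.
Local Open Scope ring_scope.

(* A positive-primitive (pp) formula in n free variables over R:
     phi(x_1..x_n) = exists y_1..y_m,  A x + B y = 0  (a system of k linear
   equations), with A : k x n and B : k x m matrices over R, scalars acting on
   the left (left R-modules). *)
Record ppf (R : pzRingType) (n : nat) := PPF {
  pp_eqs : nat;
  pp_bound : nat;
  pp_A : 'M[R]_(pp_eqs, n);
  pp_B : 'M[R]_(pp_eqs, pp_bound)
}.

Definition pp_sat (R : pzRingType) (n : nat) (phi : ppf R n) (M : lmodType R)
  (x : 'I_n -> M) : Prop :=
  exists y : 'I_(pp_bound phi) -> M,
    forall i : 'I_(pp_eqs phi),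
      \sum_(j < n) pp_A phi i j *: x j
      + \sum_(l < pp_bound phi) pp_B phi i l *: y l = 0.

Definition pure_epi (R : pzRingType) (N M : lmodType R) (g : {linear N -> M}) : Prop :=
  (forall m : M, exists a : N, g a = m) /\
  (forall (n : nat) (phi : ppf R n) (c : 'I_n -> M), pp_sat phi c ->
     exists a : 'I_n -> N, (forall i, g (a i) = c i) /\ pp_sat phi a).

Definition free_realization (R : pzRingType) (L : lmodType R -> Prop)
  (n : nat) (phi : ppf R n) (M : lmodType R) (m : 'I_n -> M) : Prop :=
  pp_sat phi m /\
  forall (K : lmodType R), L K -> forall c : 'I_n -> K, pp_sat phi c ->
    exists f : {linear M -> K}, forall i, f (m i) = c i.

Definition strict_atomic (R : pzRingType) (L : lmodType R -> Prop) (M : lmodType R) : Prop :=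
  forall (n : nat) (m : 'I_n -> M),
    exists phi : ppf R n, free_realization L phi m.

(* Main.v *)
Require Import Defs.
From HB Require Import structures.
From mathcomp Require Import all_boot all_order all_algebra.
From Stdlib Require Import FunctionalExtensionality.
Import GRing.Theory.
Local Open Scope ring_scope.

Definition mkLin (R : pzRingType) (U V : lmodType R) (f : U -> V) (hf : linear f)
  : {linear U -> V} := HB.pack f (GRing.isLinear.Build R U V *:%R f hf).

Lemma mkLinE R (U V : lmodType R) f hf x : @mkLin R U V f hf x = f x.
Proof. by []. Qed.

Lemma ac6 (V:zmodType) (a b c d e k : V) : a + b + (c + d) + (- e - k) = a + c - e + (b + d - k).
Proof. by rewrite (addrACA a b c d) (addrACA (a + c)). Qed.

Lemma pp_sat_lin (R : pzRingType) (U V : lmodType R) (f : {linear U -> V})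
  n (phi : ppf R n) (x : 'I_n -> U) : pp_sat phi x -> pp_sat phi (fun i => f (x i)).
Proof.
case=> y Hy; exists (fun l => f (y l)) => i.
have := congr1 f (Hy i); rewrite linear0 linearD !linear_sum => E.
by apply: eq_trans E; congr (_ + _); apply: eq_bigr => j _; rewrite linearZ.
Qed.

Section Key.
Variables (R : pzRingType) (L : lmodType R -> Prop) (N M : lmodType R).
Variable g : {linear N -> M}.
Hypothesis Hg : pure_epi g.
Hypothesis HNL : L N.
Hypothesis H2 : forall m : M, exists phi : ppf R 1, free_realization L phi (fun _ : 'I_1 => m).

Lemma key (s : seq M) : exists h : M -> N, linear h /\ forall x, x \in s -> g (h x) = x.
Proof.
elim: s => [|x s [h [hl hs]]].
  exists (fun _ => 0); split => // a u v; by rewrite scaler0 addr0.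
pose y := x - g (h x).
have [phi [sat fr]] := H2 y.
have [a [ga sa]] := Hg.2 _ _ _ sat.
have [f hf] := fr N HNL a sa.
exists (fun z => h z + f z - f (g (h z))); split.
  move=> c u v /=; rewrite !hl !linearP /= !scalerDr scalerN.
  by rewrite (addrACA (c *: h u)) (addrACA (c *: h u + c *: f u)).
move=> z; rewrite in_cons => /orP [/eqP -> | zs].
  rewrite -addrA linearD /= -(linearB f) -/y (hf ord0) ga /y.
  by rewrite addrC subrK.
by rewrite (hs z zs) addrK hs.
Qed.
End Key.

Theorem proposition3p6 (R : pzRingType) (L : lmodType R -> Prop) (N M : lmodType R)
  (HNL : L N) (HNat : strict_atomic L N)
  (Hepi : exists g : {linear N -> M}, pure_epi g) :
  strict_atomic L M <->
  (forall m : M, exists phi : ppf R 1, free_realization L phi (fun _ : 'I_1 => m)).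
Proof.
split; first by move=> H m; apply: H.
move=> H2 n m.
have [g Hg] := Hepi.
have [h [hl hs]] := @key R L N M g Hg HNL H2 [seq m i | i <- enum 'I_n].
pose H := @mkLin R M N h hl.
have [phi [sat fr]] := HNat n (fun i => H (m i)).
exists phi; split.
  have := @pp_sat_lin R N M g n phi _ sat.
  congr (pp_sat phi _); apply: functional_extensionality_dep => i /=.
  by rewrite hs // map_f // mem_enum.
move=> K LK c sc.
have [f hf] := fr K LK c sc.
exists (f \o H)%FUN => i; exact: hf.
Qed.
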